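(* For every $n\ge0$, the number of restricted ascent sequences of length $n$ equals the $n$-th Catalan number $C_n=\frac{1}{n+1}\binom{2n}{n}$.
   Context: For a sequence $(y_1,\dots,y_k)$ of integers, $\mathrm{asc}(y_1,\dots,y_k)=|\{1\le j<k: y_j<y_{j+1}\}|$. A restricted ascent sequence of length $n$ is a sequence $(x_1,\dots,x_n)$ of nonnegative integers with $x_1=0$ and, for all $2\le i\le n$, $m-1\le x_i\le 1+\mathrm{asc}(x_1,\dots,x_{i-1})$, where $m=\max(x_1,\dots,x_{i-1})$. The empty sequence is the unique restricted ascent sequence of length $0$. *)

(* Defs.v *)
From mathcomp Require Import all_boot.
Set Implicit Arguments. Unset Strict Implicit. Unset Printing Implicit Defensive.

Fixpoint asc (s : seq nat) : nat :=
  match s with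
  | x :: ((y :: _) as t) => (x < y) + asc t
  | _ => 0
  end.

Definition ras_step (p : seq nat) (x : nat) : bool :=
  ((\max_(y <- p) y).-1 <= x) && (x <= (asc p).+1).

Definition is_ras (s : seq nat) : bool :=
  match s with
  | [::] => true
  | x1 :: _ => (x1 == 0) &&
      [forall i : 'I_(size s), (1 <= i) ==> ras_step (take i s) (nth 0 s i)]
  end.

Definition catalan (n : nat) : nat := 'C(n.*2, n) %/ n.+1.

(* Main.v *)
Require Import Defs.
From mathcomp Require Import all_boot all_algebra zify.

Definition mx (p : seq nat) := \max_(y <- p) y.
Definition cands (p : seq nat) := iota (mx p).-1 ((asc p).+2 - (mx p).-1).

Fixpoint ext (p : seq nat) (k : nat) : seq (seq nat) :=
  if k is k'.+1 then flatten [seq ext (rcons p x) k' | x <- cands p] else [:: p].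

Lemma mem_cands p x : (x \in cands p) = ras_step p x.
Proof. rewrite mem_iota /ras_step /mx; lia. Qed.

Lemma ext_mem p k s : (s \in ext p k) = [&& size s == size p + k, take (size p) s == p &
   all (fun i => ras_step (take i s) (nth 0 s i)) (iota (size p) k)].
Proof.
elim: k p => [|k IH] p /=.
  rewrite inE addn0 andbT; apply/eqP/andP => [->|[/eqP hs /eqP ht]].
    by rewrite take_size.
  by rewrite -hs take_size in ht.
apply/flatten_mapP/and3P.
  move=> [x hx]; rewrite IH size_rcons => /and3P[/eqP hs /eqP ht ha].
  have lt : size p < size s by rewrite hs; lia.
  move: ht; rewrite (take_nth 0) // => /eqP; rewrite eqseq_rcons => /andP[/eqP hp /eqP hn].
  split; first (by rewrite hs; apply/eqP; lia); first by rewrite hp.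
  by rewrite hp hn -mem_cands hx.
move=> [/eqP hs /eqP ht /andP[hr ha]].
have lt : size p < size s by rewrite hs; lia.
exists (nth 0 s (size p)); first by rewrite mem_cands -{1}ht.
rewrite IH size_rcons hs (take_nth 0) // ht; apply/and3P; split => //; apply/eqP; lia.
Qed.

Lemma ext_take p k s : s \in ext p k -> take (size p) s = p.
Proof. by rewrite ext_mem => /and3P[_ /eqP -> _]. Qed.

Lemma ext_uniq p k : uniq (ext p k).
Proof.
elim: k p => [|k IH] p //=.
have : uniq (cands p) by apply: iota_uniq.
elim: (cands p) => [|x xs IHx] //= /andP[hx hxs].
rewrite cat_uniq IH IHx // andbT /=.
apply/hasPn => s /flatten_mapP [y hy hs]; apply/negP => hs'.
have h1 := ext_take _ _ _ hs; have h2 := ext_take _ _ _ hs'.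
have : rcons p x = rcons p y by rewrite -h1 -h2 !size_rcons.
by move/eqP; rewrite eqseq_rcons eqxx /= => /eqP hxy; rewrite hxy hy in hx.
Qed.

Lemma asc_rcons y q x : asc (rcons (y :: q) x) = asc (y :: q) + (last y q < x).
Proof.
elim: q y => [|z q IH] y //=; first by rewrite addn0.
move: (IH z) => /= ->; by rewrite addnA.
Qed.

Fixpoint cntS (k m a l : nat) : nat :=
  if k is k'.+1 then sumn [seq cntS k' (maxn m x) (a + (l < x)) x | x <- iota m.-1 (a.+2 - m.-1)] else 1.

Lemma size_ext k y q : size (ext (y :: q) k) = cntS k (mx (y :: q)) (asc (y :: q)) (last y q).
Proof.
elim: k y q => [|k IH] y q //=.
rewrite size_flatten /shape -map_comp /cands.
congr sumn; apply: eq_map => x.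
rewrite /comp IH -rcons_cons asc_rcons last_rcons; congr cntS.
by rewrite /mx -cats1 big_cat big_seq1.
Qed.

Module Alg.
Import GRing.Theory.
Local Open Scope ring_scope.

Fixpoint sumI (H : nat -> int) (n : nat) : int :=
  if n is n'.+1 then sumI H n' + H n' else 0.

Fixpoint G (n z : nat) : int := if n is n'.+1 then sumI (G n') z.+2 else 1.

Fixpoint Q (e : nat) (g : nat -> int) (z : nat) : int :=
  if e is e'.+1 then Q e' g z - Q e' g z.+1 + Q e' g z.+2 else g z.

Lemma sumIS H n : sumI H n.+1 = sumI H n + H n.
Proof. by []. Qed.

Lemma QS e g z : Q e.+1 g z = Q e g z - Q e g z.+1 + Q e g z.+2.
Proof. by []. Qed.

Lemma Qsig g e z : Q e (fun z => sumI g z.+2) z = sumI g z.+2 + sumI (fun j => Q j g z.+3) e.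
Proof.
elim: e z => [|e IH] z; first by rewrite /= addr0.
have hs : forall k, sumI (fun j => Q j.+1 g k) e =
   sumI (fun j => Q j g k) e - sumI (fun j => Q j g k.+1) e + sumI (fun j => Q j g k.+2) e.
  move=> k; elim: e {IH} => [|e IHe] /=; first by [].
  move: IHe => /= ->; lia.
have hs2 : forall k, sumI (fun j => Q j g k) e.+1 = g k + sumI (fun j => Q j.+1 g k) e.
  move=> k; elim: e {IH hs} => [|e IHe]; first by rewrite /= add0r addr0.
  change (sumI (fun j => Q j g k) e.+1 + Q e.+1 g k = g k + (sumI (fun j => Q j.+1 g k) e + Q e.+1 g k)).
  rewrite IHe; lia.
rewrite QS !IH hs2 hs /=; lia.
Qed.

Lemma lemA g e : g 0%N + g 1%N + g 2%N + sumI (fun j => Q j g 4) e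
  = Q e.+1 g 0 + Q e g 1 + sumI (fun j => Q j g 1) e.+1.
Proof.
elim: e => [|e IH]; first by rewrite /=; lia.
rewrite (sumIS _ e) (sumIS _ e.+1) (QS e.+1 g 0) (QS e g 1) (QS e g 2).
move: IH; lia.
Qed.

Lemma lemB g e : g 0%N + g 1%N + sumI (fun j => Q j g 3) e.+1
  = Q e.+1 g 0 + Q e.+1 g 1 + sumI (fun j => Q j g 1) e.+1.
Proof.
elim: e => [|e IH]; first by rewrite /=; lia.
rewrite (sumIS _ e.+1) (sumIS _ e.+1) (QS e.+1 g 0) (QS e.+1 g 1).
move: IH; lia.
Qed.
Import GRing.Theory.
Local Open Scope ring_scope.

Definition V k e (d : nat) : int := if d is 0%N then Q e (G k) 1 else Q e.+1 (G k) 0.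

Lemma Q1 e z : Q e (fun _ => 1) z = 1.
Proof. elim: e z => [|e IH] z //=; rewrite !IH; lia. Qed.

Lemma QG e k z : Q e (G k.+1) z = sumI (G k) z.+2 + sumI (fun j => Q j (G k) z.+3) e.
Proof. exact: Qsig. Qed.

Lemma Vstep0 k e : V k.+1 e 0 = V k e 1 + V k e 0 + sumI (fun j => V k j 0) e.+1.
Proof. rewrite /V QG -lemA /=; lia. Qed.

Lemma Vstep1 k e : V k.+1 e 1 = V k e 1 + V k e.+1 0 + sumI (fun j => V k j 0) e.+1.
Proof. rewrite /V QG -lemB /=; lia. Qed.

Lemma sum_iota_rev (F : nat -> nat) (H : nat -> int) s n :
  (forall i, (i < n)%N -> (F (s + i)%N)%:Z = H (n.-1 - i)%N) ->
  (sumn [seq F x | x <- iota s n])%:Z = sumI H n.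
Proof.
elim: n s => [|n IH] s hF //=.
rewrite PoszD (IH s.+1); last first.
  move=> i hi; rewrite addSnnS hF //; congr H; lia.
have := hF 0%N isT; rewrite addn0 subn0 /= => ->; lia.
Qed.

Lemma cnt_main k : forall m a l, (0 < m)%N -> (m <= a)%N -> (l == m) || (l.+1 == m) ->
  (cntS k m a l)%:Z = V k (a - m) (m - l).
Proof.
elim: k => [|k IH] m a l hm hma hl.
  by rewrite /V /=; case: (m - l)%N => [|d]; rewrite !Q1; lia.
case: m hm hma hl => // m' _ hma hl.
have [e ->] : exists e, a = (m'.+1 + e)%N by exists (a - m'.+1)%N; lia.
have -> : (m'.+1 + e - m'.+1 = e)%N by lia.
set F := fun x => cntS k (maxn m'.+1 x) (m'.+1 + e + (l < x)) x.
have -> : cntS k.+1 m'.+1 (m'.+1 + e) l = (F m' + (F m'.+1 + sumn [seq F x | x <- iota m'.+2 e.+1]))%N.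
  rewrite /=.
  have -> : ((m'.+1 + e).+2 - m' = e.+3)%N by lia.
  by [].
have htail : (sumn [seq F x | x <- iota m'.+2 e.+1])%:Z = sumI (fun j => V k j 0) e.+1.
  apply: sum_iota_rev => i hi.
  rewrite /F.
  have -> : maxn m'.+1 (m'.+2 + i) = (m'.+2 + i)%N by lia.
  rewrite IH; [|lia|lia|by rewrite eqxx].
  rewrite subnn; congr V; lia.
rewrite 2!PoszD htail.
case/orP: hl => /eqP hl; [|case: hl => hl].
- rewrite /F IH; [|lia|lia|lia].
  rewrite IH; [|lia|lia|lia].
  rewrite hl.
  have -> : (maxn m'.+1 m' = m'.+1)%N by lia.
  have -> : (maxn m'.+1 m'.+1 = m'.+1)%N by lia.
  have -> : (m'.+1 < m')%N = false by lia.
  have -> : (m'.+1 < m'.+1)%N = false by lia.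
  rewrite !addn0 !subnn addKn Vstep0.
  have -> : (m'.+1 - m' = 1)%N by lia.
  lia.
- rewrite /F IH; [|lia|lia|lia].
  rewrite IH; [|lia|lia|lia].
  rewrite hl.
  have -> : (maxn m'.+1 m' = m'.+1)%N by lia.
  have -> : (maxn m'.+1 m'.+1 = m'.+1)%N by lia.
  have -> : (m' < m')%N = false by lia.
  have -> : (m' < m'.+1)%N = true by lia.
  rewrite addn0 subnn.
  have -> : (m'.+1 + e + true - m'.+1 = e.+1)%N by lia.
  have -> : (m'.+1 + e - m'.+1 = e)%N by lia.
  have -> : (m'.+1 - m' = 1)%N by lia.
  rewrite Vstep1; lia.
Qed.
Import GRing.Theory.
Local Open Scope ring_scope.

Lemma cnt0 k : (cntS k 0 0 0)%:Z = G k 0.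
Proof.
elim: k => [|k IH] //.
rewrite /= addn0 PoszD IH (_ : maxn 0 1 = 1)%N // add0n addn0 (cnt_main k 1 1 1) //=; lia.
Qed.

Lemma sumI1 n : sumI (fun _ => 1) n = n%:Z.
Proof. elim: n => [|n IH] //=; rewrite IH; lia. Qed.

Lemma Gc n z : G n.+1 z = ('C((n.*2 + z).+3, n.+1))%:Z - ('C((n.*2 + z).+3, n))%:Z.
Proof.
elim: n z => [|n IH] z.
  rewrite /= sumI1 bin1 bin0; lia.
elim: z => [|z IHz].
  change (0 + G n.+1 0 + G n.+1 1 = ('C(((n.+1).*2 + 0).+3, n.+2))%:Z - ('C(((n.+1).*2 + 0).+3, n.+1))%:Z).
  rewrite !IH.
  have -> : ((n.+1).*2 + 0).+3 = (n.*2).+4.+1 by rewrite doubleS addn0.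
  have -> : (n.*2 + 1).+3 = (n.*2).+4 by rewrite addn1.
  rewrite addn0.
  have h1 := binS (n.*2).+4 n.+1.
  have h2 := binS (n.*2).+4 n.
  have h3 := binS (n.*2).+3 n.+1.
  have h4 := binS (n.*2).+3 n.
  have hs : 'C((n.*2).+3, n.+2) = 'C((n.*2).+3, n.+1).
    rewrite -bin_sub; last lia.
    congr binomial; lia.
  lia.
change (G n.+2 z + G n.+1 z.+2 = ('C(((n.+1).*2 + z.+1).+3, n.+2))%:Z - ('C(((n.+1).*2 + z.+1).+3, n.+1))%:Z).
rewrite IHz IH.
have -> : ((n.+1).*2 + z.+1).+3 = (n.*2 + z).+4.+2 by rewrite doubleS; lia.
have -> : ((n.+1).*2 + z).+3 = (n.*2 + z).+4.+1 by rewrite doubleS; lia.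
have -> : (n.*2 + z.+2).+3 = (n.*2 + z).+4.+1 by lia.
have h1 := binS (n.*2 + z).+4.+1 n.+1.
have h2 := binS (n.*2 + z).+4.+1 n.
lia.
Qed.

Lemma Gcat n : G n 0 = (catalan n.+1)%:Z.
Proof.
case: n => [|n]; first by [].
rewrite Gc addn0 /catalan.
set N := (n.*2).+3.
have hA := binS N n.+1.
have hs : 'C(N, n.+2) = 'C(N, n.+1).
  rewrite -bin_sub; last (rewrite /N; lia).
  congr binomial; rewrite /N; lia.
have hm := mul_bin_left N n.
have -> : (n.+2).*2 = N.+1 by rewrite /N doubleS.
have hBA : ('C(N, n) <= 'C(N, n.+1))%N.
  have : (N - n = n.+3)%N by rewrite /N; lia.
  move=> e; rewrite e in hm; nia.
have -> : 'C(N.+1, n.+2) = (n.+3 * ('C(N, n.+1) - 'C(N, n)))%N.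
  have : (N - n = n.+3)%N by rewrite /N; lia.
  move=> e; rewrite e in hm; rewrite mulnBr; nia.
rewrite mulKn //; lia.
Qed.

End Alg.
Import Alg.

Lemma forall_iota (P : nat -> bool) m :
  [forall i : 'I_m.+1, (1 <= i) ==> P i] = all P (iota 1 m).
Proof.
apply/forallP/allP => [h x|h i].
  rewrite mem_iota => hx.
  have hx' : x < m.+1 by lia.
  by have := h (Ordinal hx'); rewrite /= (_ : 1 <= x) //; lia.
apply/implyP => hi; apply: h; rewrite mem_iota; have := ltn_ord i; lia.
Qed.

Theorem theorem10 (n : nat) :
  exists L : seq (seq nat),
    [/\ uniq L,
        forall s : seq nat, (s \in L) = is_ras s && (size s == n)
      & size L = catalan n].
Proof.
exists (if n is n'.+1 then ext [:: 0] n' else [:: [::]]).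
split.
- by case: n => [|n] //; apply: ext_uniq.
- case: n => [|n] s.
    by case: s => [|x s] //=; rewrite andbF.
  rewrite ext_mem; case: s => [|x t] //=.
  rewrite take0 eqseq_cons andbT add1n !eqSS (forall_iota (fun i => ras_step (take i (x :: t)) (nth 0 (x :: t) i))).
  case: (eqVneq (size t) n) => [->|hn]; last by rewrite !andbF.
  by rewrite /= andbT.
- case: n => [|n] //.
  rewrite size_ext (_ : mx [:: 0] = 0); last by rewrite /mx big_seq1.
  by have := cnt0 n; rewrite Gcat /= => -[->].
Qed.
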